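(* Let $X$ be a special (abstract) rank one group with abelian unipotent subgroups $A$ and $B$. For $1 \neq a \in A$ put $n(a) := a\, b(a)^{-1} a$. Then for all $1 \neq a_1, a_2 \in A$, $$B^{a_1 a_2 n(a_2^{-1}) a_2} = B^{a_2 a_1 n(a_1^{-1}) a_1}.$$
   Context: For a group $X$ and $g \in X$, write $B^g = g^{-1}Bg$. A group $X$ is an (abstract) rank one group with abelian unipotent subgroups $A$ and $B$ if $X = \langle A, B\rangle$ where $A$ and $B$ are different abelian subgroups of $X$ such that for each $1 \neq a \in A$ there is an element $1 \neq b \in B$ with $A^b = B^a$, and for each $1 \neq b \in B$ there is an element $1 \neq a \in A$ with $B^a = A^b$. In such a group, for each $1 \neq a \in A$ the element $1 \neq b \in B$ with $A^b = B^a$ is uniquely determined and is denoted $b(a)$. The group $X$ is called special if $b(a^{-1}) = b(a)^{-1}$ for all $1 \neq a \in A$. *)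

(* Defs.v *)
Record Group := {
  carrier :> Type;
  mul : carrier -> carrier -> carrier;
  inv : carrier -> carrier;
  one : carrier;
  mulA : forall x y z, mul x (mul y z) = mul (mul x y) z;
  mul1g : forall x, mul one x = x;
  mulg1 : forall x, mul x one = x;
  mulVg : forall x, mul (inv x) x = one;
  mulgV : forall x, mul x (inv x) = one
}.

Arguments mul {g}.
Arguments inv {g}.
Arguments one {g}.

Section Defs.
Variable X : Group.

Definition set_eq (P Q : X -> Prop) : Prop := forall x, P x <-> Q x.

Definition is_subgroup (S : X -> Prop) : Prop :=
  S one /\ (forall x y, S x -> S y -> S (mul x y)) /\ (forall x, S x -> S (inv x)).

Definition is_abelian (S : X -> Prop) : Prop :=
  forall x y, S x -> S y -> mul x y = mul y x.

Inductive gen (S : X -> Prop) : X -> Prop :=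
| gen_in : forall x, S x -> gen S x
| gen_one : gen S one
| gen_mul : forall x y, gen S x -> gen S y -> gen S (mul x y)
| gen_inv : forall x, gen S x -> gen S (inv x).

(* S^g = g^{-1} S g *)
Definition conjset (S : X -> Prop) (g : X) : X -> Prop :=
  fun x => exists s, S s /\ x = mul (inv g) (mul s g).

Definition rank_one (A B : X -> Prop) : Prop :=
  is_subgroup A /\ is_subgroup B /\ is_abelian A /\ is_abelian B /\
  ~ set_eq A B /\
  (forall x : X, gen (fun y => A y \/ B y) x) /\
  (forall a, A a -> a <> one ->
     exists b, B b /\ b <> one /\ set_eq (conjset A b) (conjset B a)) /\
  (forall b, B b -> b <> one ->
     exists a, A a /\ a <> one /\ set_eq (conjset B a) (conjset A b)).

(* is_b A B a b  :<->  b = b(a), i.e. 1 <> b in B with A^b = B^a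
   (b(a) is uniquely determined by this property) *)
Definition is_b (A B : X -> Prop) (a b : X) : Prop :=
  B b /\ b <> one /\ set_eq (conjset A b) (conjset B a).

Definition special (A B : X -> Prop) : Prop :=
  forall a b, A a -> a <> one -> is_b A B a b -> is_b A B (inv a) (inv b).

End Defs.

Arguments set_eq {X}.
Arguments conjset {X}.
Arguments rank_one {X}.
Arguments is_b {X}.
Arguments special {X}.

(* Main.v *)
Require Import Defs.

Section H.
Variable X : Group.

Lemma mulgK (x y : X) : mul (mul x y) (inv y) = x.
Proof. rewrite <- mulA, mulgV, mulg1. reflexivity. Qed.

Lemma mulgVK (x y : X) : mul (mul x (inv y)) y = x.
Proof. rewrite <- mulA, mulVg, mulg1. reflexivity. Qed.

Lemma inv_uniq (x y : X) : mul x y = one -> y = inv x.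
Proof.
  intro H. rewrite <- (mul1g _ y), <- (mulVg _ x), <- mulA, H, mulg1. reflexivity.
Qed.

Lemma invK (x : X) : inv (inv x) = x.
Proof. symmetry. apply inv_uniq. apply mulVg. Qed.

Lemma invM (g h : X) : inv (mul g h) = mul (inv h) (inv g).
Proof.
  symmetry. apply inv_uniq. rewrite !mulA, mulgK, mulgV. reflexivity.
Qed.

Lemma conjset_mul (S : X -> Prop) (g h : X) :
  set_eq (conjset S (mul g h)) (conjset (conjset S g) h).
Proof.
  intro x; split.
  - intros [s [Hs ->]]. exists (mul (inv g) (mul s g)). split.
    + exists s; auto.
    + rewrite invM, !mulA. reflexivity.
  - intros [y [[s [Hs ->]] ->]]. exists s. split; auto.
    rewrite invM, !mulA. reflexivity.
Qed.

Lemma conjset_eq (S T : X -> Prop) (g : X) :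
  set_eq S T -> set_eq (conjset S g) (conjset T g).
Proof.
  intros E x; split; intros [s [Hs ->]]; exists s; split; auto; apply E; auto.
Qed.

Lemma set_eq_trans (S T U : X -> Prop) : set_eq S T -> set_eq T U -> set_eq S U.
Proof. intros E F x. split; intro H; [apply F, E, H | apply E, F, H]. Qed.

Lemma set_eq_sym (S T : X -> Prop) : set_eq S T -> set_eq T S.
Proof. intros E x. split; apply E. Qed.

End H.

Theorem lemma2p1 (X : Group) (A B : X -> Prop) :
  rank_one A B -> special A B ->
  forall a1 a2 c1 c2 : X,
    A a1 -> a1 <> one -> A a2 -> a2 <> one ->
    is_b A B (inv a1) c1 -> is_b A B (inv a2) c2 ->
    set_eq
      (conjset B (mul (mul (mul a1 a2) (mul (inv a2) (mul (inv c2) (inv a2)))) a2))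
      (conjset B (mul (mul (mul a2 a1) (mul (inv a1) (mul (inv c1) (inv a1)))) a1)).
Proof.
  intros [[_ [_ HAinv]] [[_ [_ HBinv]] [_ [HBab _]]]] Hsp a1 a2 c1 c2 HA1 Hn1 HA2 Hn2 Hb1 Hb2.
  assert (Hi1 : inv (one : X) = one).
  { symmetry. apply inv_uniq. apply mulg1. }
  assert (Hne : forall x : X, x <> one -> inv x <> one).
  { intros x Hx E. apply Hx. rewrite <- (invK X x), E. exact Hi1. }
  pose proof (Hsp _ _ (HAinv _ HA1) (Hne _ Hn1) Hb1) as S1.
  pose proof (Hsp _ _ (HAinv _ HA2) (Hne _ Hn2) Hb2) as S2.
  rewrite invK in S1, S2.
  destruct S1 as [_ [_ E1]]. destruct S2 as [_ [_ E2]].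
  destruct Hb1 as [Bc1 _]. destruct Hb2 as [Bc2 _].
  assert (L : mul (mul (mul a1 a2) (mul (inv a2) (mul (inv c2) (inv a2)))) a2
              = mul a1 (inv c2)).
  { rewrite !mulA, mulgK, mulgVK. reflexivity. }
  assert (R : mul (mul (mul a2 a1) (mul (inv a1) (mul (inv c1) (inv a1)))) a1
              = mul a2 (inv c1)).
  { rewrite !mulA, mulgK, mulgVK. reflexivity. }
  rewrite L, R.
  apply set_eq_trans with (conjset A (mul (inv c1) (inv c2))).
  - eapply set_eq_trans. apply conjset_mul.
    eapply set_eq_trans. apply conjset_eq. apply set_eq_sym. exact E1.
    apply set_eq_sym. apply conjset_mul.
  - rewrite (HBab _ _ (HBinv _ Bc1) (HBinv _ Bc2)).
    eapply set_eq_trans. apply conjset_mul.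
    eapply set_eq_trans. apply conjset_eq. exact E2.
    apply set_eq_sym. apply conjset_mul.
Qed.
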